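(* Let $\mathcal D=\{d_1,\dots,d_s\}$ and $\mathcal H=\{h_1,\dots,h_n\}$ be finite sets, where each hypothesis $h_i$ is a probability distribution $\mathbb P[\cdot\mid h_i]$ on $\mathcal D$, the hypotheses are pairwise distinct as distributions, and the prior $\bm p=(p_1,\dots,p_n)$ on $\mathcal H$ has all $p_i>0$. Consider chained iterated learning with initial hypothesis $\bm h_{\mathrm{init}}=h_1$. Then there is a constant $C>0$ independent of $t,\delta,\varepsilon$ such that for any $0<\delta,\varepsilon<1$, the sample size sequence $$m_t=\frac{8sn^2}{\delta^2}\Bigl(\ln\frac{t}{\varepsilon}+C\Bigr)$$ makes iterated learning $(\delta,\varepsilon)$-self-sustaining: for every $t\ge1$, a random hypothesis $h$ drawn from the posterior $\bm h^t$ of learner $t$ satisfies $d_{TV}(\mathbb P[\cdot\mid h],\mathbb P[\cdot\mid h_1])\le\delta$ with probability at least $1-\varepsilon$.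
   Context: $d_{TV}$ is the total variation distance (half the $\ell_1$-norm of the difference) between distributions on $\mathcal D$. Chained iterated learning: for $\mathbf d=(x_1,\dots,x_m)\in\mathcal D^m$ let $\mathbb P[\mathbf d\mid h]=\prod_{k=1}^m\mathbb P[x_k\mid h]$ and Bayesian posterior $\mathbb P[h_j\mid\mathbf d]=\mathbb P[\mathbf d\mid h_j]p_j/\sum_{k=1}^n\mathbb P[\mathbf d\mid h_k]p_k$. Learner $t\ge1$ picks a hypothesis $h_i$ from the posterior of learner $t-1$ (for $t=1$, from $\bm h_{\mathrm{init}}$), draws $m_t$ i.i.d. samples $\mathbf d\in\mathcal D^{m_t}$ from $h_i$, and forms the posterior $\mathbb P[\cdot\mid\mathbf d]$. The transition probabilities are $P^{|t}_{ij}=\sum_{\mathbf d\in\mathcal D^{m_t}}\mathbb P[h_j\mid\mathbf d]\,\mathbb P[\mathbf d\mid h_i]$, and the (marginal) posterior of learner $t$ is the row vector $\bm h^t=\bm h^{t-1}P^{|t}$ with $\bm h^0=(1,0,\dots,0)$. *)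

(* Defs.v *)
From HB Require Import structures.
From mathcomp Require Import all_boot all_order all_algebra.
From mathcomp Require Import all_classical all_reals all_analysis.
Set Implicit Arguments. Unset Strict Implicit. Unset Printing Implicit Defensive.
Import Order.TTheory GRing.Theory Num.Theory.
Local Open Scope ring_scope.

Section IL.
Variables (R : realType) (n s : nat).
(* L i x = P[x | h_i], hypotheses H = 'I_n, data D = 'I_s *)
Variable L : 'I_n -> 'I_s -> R.
Variable p : 'I_n -> R.

Definition lik (m : nat) (d : m.-tuple 'I_s) (h : 'I_n) : R :=
  \prod_(k < m) L h (tnth d k).

Definition posterior (m : nat) (d : m.-tuple 'I_s) (j : 'I_n) : R :=
  lik d j * p j / \sum_(k < n) lik d k * p k.

Definition trans (m : nat) (i j : 'I_n) : R :=
  \sum_(d : m.-tuple 'I_s) posterior d j * lik d i.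

(* marginal posterior h^t of learner t, for sample sizes msz t (t >= 1);
   h^0 = indicator of the initial hypothesis h0 *)
Fixpoint hpost (h0 : 'I_n) (msz : nat -> nat) (t : nat) : 'I_n -> R :=
  match t with
  | 0 => fun i => if i == h0 then 1 else 0
  | t'.+1 => fun j => \sum_(i < n) hpost h0 msz t' i * trans (msz t) i j
  end.

Definition dTV (i j : 'I_n) : R :=
  2^-1 * \sum_(x < s) `|L i x - L j x|.

End IL.

Definition sample_size (R : realType) (n s : nat) (C delta eps : R) (t : nat) : nat :=
  `|Num.ceil ((8 * s%:R * (n%:R) ^+ 2 / delta ^+ 2) * (ln (t%:R / eps) + C))|%N.

(* Main.v *)
Require Import Defs.
From HB Require Import structures.
From mathcomp Require Import all_boot all_order all_algebra.
From mathcomp Require Import all_classical all_reals all_analysis.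
From mathcomp Require Import ring lra.
Import Order.TTheory GRing.Theory Num.Theory.
Set Implicit Arguments. Unset Strict Implicit.
Local Open Scope ring_scope.

Lemma post_key (R : realType) (u v pi pj D : R) :
  0 <= u -> 0 <= v -> 0 < pi -> pi <= 1 -> 0 < pj -> pj <= 1 ->
  u ^+ 2 * pi <= D -> v ^+ 2 * pj <= D ->
  v ^+ 2 * pj / D * u ^+ 2 <= pi^-1 * (u * v).
Proof.
move=> u0 v0 pi0 pi1 pj0 pj1 Da Db.
have D0 : 0 <= D by apply: le_trans Da; apply: mulr_ge0 => //; [exact: sqr_ge0|exact: ltW].
case: (eqVneq D 0) => [->|Dn0].
  by rewrite invr0 mulr0 mul0r; apply: mulr_ge0; [rewrite invr_ge0 ltW|apply: mulr_ge0].
have Dp : 0 < D by rewrite lt_def Dn0.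
set X := v ^+ 2 * pj / D * u ^+ 2.
have XD : X * D = u ^+ 2 * v ^+ 2 * pj.
  by rewrite /X; field.
have X0 : 0 <= X.
  rewrite /X; apply: mulr_ge0; last exact: sqr_ge0.
  apply: divr_ge0 => //; apply: mulr_ge0; [exact: sqr_ge0|exact: ltW].
suff : X * pi <= u * v.
  by move=> H; rewrite ler_pdivlMl // mulrC.
have uv0 : 0 <= u * v by apply: mulr_ge0.
have H1 : (X * pi) ^+ 2 * D ^+ 2 <= (u * v) ^+ 2 * D ^+ 2.
  have -> : (X * pi) ^+ 2 * D ^+ 2 = (u ^+ 2 * v ^+ 2) ^+ 2 * pj ^+ 2 * pi ^+ 2.
    have -> : (X * pi) ^+ 2 * D ^+ 2 = (X * D) ^+ 2 * pi ^+ 2 by ring.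
    rewrite XD; ring.
  have DD : u ^+ 2 * pi * (v ^+ 2 * pj) <= D * D.
    apply: ler_pM => //; apply: mulr_ge0 => //; try exact: sqr_ge0; exact: ltW.
  have ppi : pi * pj <= 1 by nra.
  have a0 : 0 <= u ^+ 2 * v ^+ 2 by apply: mulr_ge0; exact: sqr_ge0.
  set A := u ^+ 2 * v ^+ 2 in a0 *.
  have -> : (u * v) ^+ 2 = A by rewrite /A; ring.
  have S1 : A * (A * (pi * pj)) <= A * D ^+ 2.
    apply: ler_wpM2l => //; rewrite expr2; apply: le_trans DD; rewrite /A; lra.
  have S2 : A ^+ 2 * pj ^+ 2 * pi ^+ 2 <= A * (A * (pi * pj)).
    have -> : A ^+ 2 * pj ^+ 2 * pi ^+ 2 = (A * (A * (pi * pj))) * (pi * pj) by ring.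
    apply: ler_piMr => //; apply: mulr_ge0 => //; apply: mulr_ge0 => //; apply: mulr_ge0; exact: ltW.
  exact: le_trans S2 S1.
have H2 : (X * pi) ^+ 2 <= (u * v) ^+ 2.
  by rewrite -(ler_pM2r (exprn_gt0 2 Dp)).
have Xp0 : 0 <= X * pi by apply: mulr_ge0 => //; exact: ltW.
nra.

Qed.
Lemma cauchy_schwarz (R : realFieldType) (s : nat) (x y : 'I_s -> R) :
  (\sum_i x i * y i) ^+ 2 <= (\sum_i x i ^+ 2) * (\sum_i y i ^+ 2).
Proof.
have H : 0 <= \sum_i \sum_j (x i * y j - x j * y i) ^+ 2.
  by apply: sumr_ge0 => i _; apply: sumr_ge0 => j _; exact: sqr_ge0.
have E : \sum_i \sum_j (x i * y j - x j * y i) ^+ 2 =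
   2 * ((\sum_i x i ^+ 2) * (\sum_i y i ^+ 2)) - 2 * (\sum_i x i * y i) ^+ 2.
  have E1 : forall i j, (x i * y j - x j * y i) ^+ 2 =
     x i ^+ 2 * y j ^+ 2 + x j ^+ 2 * y i ^+ 2 - 2 * ((x i * y i) * (x j * y j)).
    by move=> i j; ring.
  under eq_bigr do under eq_bigr do rewrite E1.
    under eq_bigr do rewrite !sumrB !big_split /=.
  rewrite !sumrB !big_split /=.
  rewrite [in X in _ + X = _](exchange_big) /=.
  have A1 : \sum_(i < s) \sum_(j < s) x i ^+ 2 * y j ^+ 2 = (\sum_i x i ^+ 2) * (\sum_i y i ^+ 2).
    by rewrite big_distrl /=; apply: eq_bigr => i _; rewrite big_distrr.
  have A2 : \sum_(i < s) \sum_(j < s) x j ^+ 2 * y i ^+ 2 = (\sum_i x i ^+ 2) * (\sum_i y i ^+ 2).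
    by rewrite exchange_big /=.
  have A3 : \sum_(j < s) \sum_(i < s) 2 * (x i * y i * (x j * y j)) = 2 * (\sum_i x i * y i) ^+ 2.
    rewrite expr2 [X in _ = 2 * X]big_distrl /= mulr_sumr; apply: eq_bigr => j _.
    rewrite [X in _ = 2 * X]big_distrr /= mulr_sumr; apply: eq_bigr => i _; ring.
  rewrite A1 A2 A3; ring.
rewrite E in H; lra.
Qed.
Lemma bc_bound (R : realType) (s : nat) (a b : 'I_s -> R)
  (a0 : forall x, 0 <= a x) (b0 : forall x, 0 <= b x)
  (a1 : \sum_x a x = 1) (b1 : \sum_x b x = 1) :
  (\sum_x Num.sqrt (a x) * Num.sqrt (b x)) ^+ 2 <=
     1 - (2^-1 * \sum_x `|a x - b x|) ^+ 2.
Proof.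
set f := fun x => Num.sqrt (a x). set g := fun x => Num.sqrt (b x).
have fa : forall x, f x ^+ 2 = a x by move=> x; rewrite sqr_sqrtr.
have gb : forall x, g x ^+ 2 = b x by move=> x; rewrite sqr_sqrtr.
have f0 : forall x, 0 <= f x by move=> x; exact: sqrtr_ge0.
have g0 : forall x, 0 <= g x by move=> x; exact: sqrtr_ge0.
set BC := \sum_x f x * g x.
have E1 : \sum_x `|a x - b x| = \sum_x `|f x - g x| * (f x + g x).
  apply: eq_bigr => x _; rewrite -fa -gb.
  have -> : f x ^+ 2 - g x ^+ 2 = (f x - g x) * (f x + g x) by ring.
  by rewrite normrM (ger0_norm (addr_ge0 (f0 x) (g0 x))).
have E2 : \sum_x (`|f x - g x|) ^+ 2 = 2 - 2 * BC.
  have -> : \sum_x (`|f x - g x|) ^+ 2 = \sum_x (a x + b x - 2 * (f x * g x)).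
    apply: eq_bigr => x _; rewrite real_normK ?num_real // -fa -gb; ring.
  by rewrite sumrB big_split /= a1 b1 -mulr_sumr.
have E3 : \sum_x (f x + g x) ^+ 2 = 2 + 2 * BC.
  have -> : \sum_x (f x + g x) ^+ 2 = \sum_x (a x + b x + 2 * (f x * g x)).
    apply: eq_bigr => x _; rewrite -fa -gb; ring.
  by rewrite big_split big_split /= a1 b1 -mulr_sumr.
have CS := @cauchy_schwarz R s (fun x => `|f x - g x|) (fun x => f x + g x).
rewrite /= E2 E3 -E1 in CS.
lra.
Qed.
Lemma pow_bound (R : realType) (beta g M : R) (m : nat) :
  0 <= beta -> beta ^+ 2 <= 1 - g ^+ 2 -> 2 * M <= g ^+ 2 * m%:R ->
  beta ^+ m <= expR (- M).
Proof.
move=> b0 bg gm.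
have e0 : 0 <= expR (- M) by exact: ltW (expR_gt0 _).
rewrite -(@ler_pXn2r _ 2) // ?nnegrE ?exprn_ge0 //.
rewrite -exprM mulnC exprM.
apply: (@le_trans _ _ ((1 - g ^+ 2) ^+ m)).
  by apply: lerXn2r => //; rewrite nnegrE ?exprn_ge0 //; apply: le_trans bg; exact: sqr_ge0.
apply: (@le_trans _ _ (expR (- g ^+ 2) ^+ m)).
  apply: lerXn2r => //; rewrite ?nnegrE; [apply: le_trans bg; exact: sqr_ge0|exact: ltW (expR_gt0 _)|].
  by have := expR_ge1Dx (- g ^+ 2); rewrite addrC.
rewrite -expRM_natl -expRM_natl ler_expR; lra.
Qed.
Lemma final_arith (R : realType) (Bc x : R) : 0 <= Bc -> 1 <= x ->
  Bc / x ^+ 2 + Bc * (2 - 2 / x) <= Bc * (2 - 2 / (x + 1)).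
Proof.
move=> B0 x1.
have xp : 0 < x by lra.
have -> : Bc / x ^+ 2 + Bc * (2 - 2 / x) = Bc * (2 - 2 / x + 1 / x ^+ 2) by ring.
apply: ler_wpM2l => //.
have -> : 2 - 2 / x + 1 / x ^+ 2 = 2 - (2 * x - 1) / x ^+ 2 by field; lra.
have -> : 2 - 2 / (x + 1) = 2 - (2 * x) / (x * (x + 1)) by field; lra.
rewrite lerD2l lerN2.
rewrite -subr_ge0.
have -> : (2 * x - 1) / x ^+ 2 - 2 * x / (x * (x + 1)) = (x - 1) / (x ^+ 2 * (x + 1)).
  by field; lra.
apply: divr_ge0; first lra.
apply: mulr_ge0; [exact: sqr_ge0|lra].
Qed.

Lemma sum_sub_le (R : realType) (n : nat) (P : pred 'I_n) (f : 'I_n -> R) :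
  (forall i, 0 <= f i) -> \sum_(i | P i) f i <= \sum_i f i.
Proof.
move=> f0; rewrite [X in _ <= X](bigID P) /= lerDl; exact: sumr_ge0.
Qed.
Lemma sum_tuple_prod (R : comNzRingType) (m s : nat) (f : 'I_s -> R) :
  \sum_(d : m.-tuple 'I_s) \prod_(k < m) f (tnth d k) = (\sum_x f x) ^+ m.
Proof.
rewrite -[in RHS](card_ord m) -prodr_const bigA_distr_bigA /=.
rewrite (reindex (fun t : m.-tuple 'I_s => [ffun i => tnth t i])) /=.
  by apply: eq_bigr => d _; apply: eq_bigr => k _; rewrite ffunE.
exists (fun g : {ffun 'I_m -> 'I_s} => [tuple g i | i < m]) => x _.
  by apply: eq_from_tnth => i; rewrite tnth_mktuple ffunE.
by apply/ffunP => i; rewrite ffunE tnth_mktuple.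
Qed.
Section T.
Variables (R : realType) (n s : nat) (L : 'I_n -> 'I_s -> R) (p : 'I_n -> R).
Hypotheses (HL0 : forall i x, 0 <= L i x)
    (HL1 : forall i, \sum_(x < s) L i x = 1)
    (Hp0 : forall i, 0 < p i)
    (Hp1 : \sum_(i < n) p i = 1).

Lemma p_le1 i : p i <= 1.
Proof.
rewrite -Hp1 (bigD1 i) //= lerDl; apply: sumr_ge0 => k _; exact: ltW.
Qed.

Lemma lik_ge0 m (d : m.-tuple 'I_s) i : 0 <= lik L d i.
Proof. by apply: prodr_ge0 => k _. Qed.

Lemma den_ge m (d : m.-tuple 'I_s) i :
  lik L d i * p i <= \sum_(k < n) lik L d k * p k.
Proof.
rewrite (bigD1 i) //= lerDl; apply: sumr_ge0 => k _.
apply: mulr_ge0; [exact: lik_ge0|exact: ltW].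
Qed.

Lemma post_ge0 m (d : m.-tuple 'I_s) j : 0 <= posterior L p d j.
Proof.
apply: divr_ge0; first by apply: mulr_ge0; [exact: lik_ge0|exact: ltW].
apply: sumr_ge0 => k _; apply: mulr_ge0; [exact: lik_ge0|exact: ltW].
Qed.

Lemma trans_ge0 m i j : 0 <= trans L p m i j.
Proof.
apply: sumr_ge0 => d _; apply: mulr_ge0; [exact: post_ge0|exact: lik_ge0].
Qed.

Lemma trans_row m i : \sum_j trans L p m i j = 1.
Proof.
rewrite /trans exchange_big /=.
rewrite -(expr1n _ m) -(HL1 i) -sum_tuple_prod; apply: eq_bigr => d _.
rewrite -big_distrl /= -/(lik L d i).
set D := \sum_(k < n) lik L d k * p k.
have -> : \sum_j posterior L p d j = D / D by rewrite /posterior -big_distrl.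
case: (eqVneq D 0) => [D0|Dn0]; last by rewrite mulfV // mul1r.
rewrite D0 invr0 mulr0 mul0r.
apply/eqP; rewrite eq_le lik_ge0 ?andbT /=.
have := den_ge d i; rewrite -/D D0 => H.
have := Hp0 i => H2.
have := lik_ge0 d i => H3.
nra.
Qed.

Lemma trans_le m i j : trans L p m i j <=
   (p i)^-1 * (\sum_x Num.sqrt (L i x) * Num.sqrt (L j x)) ^+ m.
Proof.
rewrite -sum_tuple_prod mulr_sumr; apply: ler_sum => d _.
rewrite big_split /=.
set u := \prod_(k < m) Num.sqrt (L i (tnth d k)).
set v := \prod_(k < m) Num.sqrt (L j (tnth d k)).
have liku : forall h, lik L d h = (\prod_(k < m) Num.sqrt (L h (tnth d k))) ^+ 2.
  move=> h; rewrite -prodrXl; apply: eq_bigr => k _; rewrite sqr_sqrtr //.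
rewrite /posterior.
have Di := den_ge d i. have Dj := den_ge d j.
rewrite !liku -/u -/v in Di Dj *.
apply: post_key => //; try exact: p_le1.
  by apply: prodr_ge0 => k _; exact: sqrtr_ge0.
by apply: prodr_ge0 => k _; exact: sqrtr_ge0.
Qed.

End T.
Lemma dTV_ge0 (R : realType) n s (L : 'I_n -> 'I_s -> R) i j : 0 <= dTV L i j.
Proof. by apply: mulr_ge0; [rewrite invr_ge0|apply: sumr_ge0 => x _]. Qed.

Lemma dTV_sym (R : realType) n s (L : 'I_n -> 'I_s -> R) i j : dTV L i j = dTV L j i.
Proof. by rewrite /dTV; congr (_ * _); apply: eq_bigr => x _; rewrite distrC. Qed.

Lemma dTV_tri (R : realType) n s (L : 'I_n -> 'I_s -> R) i j k :
  dTV L i k <= dTV L i j + dTV L j k.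
Proof.
rewrite /dTV -mulrDr; apply: ler_wpM2l; first by rewrite invr_ge0.
rewrite -big_split /=; apply: ler_sum => x _; exact: ler_distD.
Qed.

Lemma dTV_ii (R : realType) n s (L : 'I_n -> 'I_s -> R) i : dTV L i i = 0.
Proof. by rewrite /dTV big1 ?mulr0 // => x _; rewrite subrr normr0. Qed.

Unset Implicit Arguments. Set Strict Implicit.

Theorem theorem2 (R : realType) (n s : nat) (L : 'I_n -> 'I_s -> R)
    (p : 'I_n -> R) (h1 : 'I_n)
    (HL0 : forall i x, 0 <= L i x)
    (HL1 : forall i, \sum_(x < s) L i x = 1)
    (Hdist : forall i j, i != j -> L i <> L j)
    (Hp0 : forall i, 0 < p i)
    (Hp1 : \sum_(i < n) p i = 1) :
  exists C : R, 0 < C /\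
    forall delta eps : R, 0 < delta < 1 -> 0 < eps < 1 ->
    forall t : nat, (1 <= t)%N ->
      \sum_(i < n | dTV L i h1 <= delta)
         hpost L p h1 (sample_size n s C delta eps) t i >= 1 - eps.
Proof.
have n0 : (0 < n)%N by apply: leq_ltn_trans (ltn_ord h1).
have s0 : (0 < s)%N.
  case: (posnP s) => // s0; exfalso.
  move: (HL1 h1); rewrite big1 => [/eqP|x _]; first by rewrite eq_sym oner_eq0.
  by have := ltn_ord x; rewrite {2}s0.
have nR : 1 <= n%:R :> R by rewrite ler1n.
have sR : 1 <= s%:R :> R by rewrite ler1n.
pose Q := \sum_k (p k)^-1.
have pQ : forall i, (p i)^-1 <= Q.
  move=> i; rewrite /Q (bigD1 i) //= lerDl; apply: sumr_ge0 => k _.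
  by rewrite invr_ge0 ltW.
have Q0 : 0 < Q by apply: lt_le_trans (pQ h1); rewrite invr_gt0.
pose C := 2 * n%:R * Q.
have C0 : 0 < C by rewrite /C; apply: mulr_gt0 => //; apply: mulr_gt0 => //; lra.
exists C; split => //.
have CeC : C * expR (- C) <= 1.
  rewrite expRN ler_pdivrMr ?expR_gt0 // mul1r.
  by apply: le_trans (expR_ge1Dx C); lra.
move=> delta eps /andP [d0 d1] /andP [e0 e1] t t1.
pose g := delta / n%:R.
have g0 : 0 < g by rewrite /g divr_gt0 //; lra.
pose F := fun X : {set 'I_n} => h1 |: [set j | [exists i in X, dTV L i j < g]].
have Fmono : {homo F : X Y / X \subset Y}.
  move=> X Y XY; apply/fintype.subsetP => j; rewrite !inE => /orP [->//|/existsP [i /andP [iX lt]]].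
  apply/orP; right; apply/existsP; exists i; apply/andP; split => //; exact: (fintype.subsetP XY).
pose A := fixset F.
have FA : F A = A := fixsetK Fmono.
have h1A : h1 \in A by rewrite -FA !inE eqxx.
have closed : forall i j, i \in A -> j \notin A -> g <= dTV L i j.
  move=> i j iA; rewrite -FA !inE negb_or => /andP [_ /existsPn /(_ i)].
  by rewrite iA /= -leNgt.
have iterd : forall k j, j \in iter k F finset.set0 -> dTV L j h1 <= k%:R * g.
  elim => [|k IH] j /=; first by rewrite inE.
  rewrite {1}/F !inE => /orP [/eqP -> | /existsP [i /andP [iX lt]]].
    by rewrite dTV_ii mulr_ge0 // ltW.
  have := IH i iX => H.
  apply: le_trans (dTV_tri L j i h1) _.
  rewrite dTV_sym -addn1 natrD mulrDl mul1r; lra.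
have Adist : forall i, i \in A -> dTV L i h1 <= delta.
  move=> i /iterd; rewrite card_ord /g mulrC divfK //.
  by rewrite pnatr_eq0 -lt0n.
pose msz := sample_size n s C delta eps.
pose ee := expR (- C).
have ee0 : 0 < ee by exact: expR_gt0.
have step : forall T : nat, (1 <= T)%N -> forall i j, i \in A -> j \notin A ->
    trans L p (msz T) i j <= Q * ((eps / T%:R) ^+ 2 * ee).
  move=> T T1 i j iA jA.
  have TR : 1 <= T%:R :> R by rewrite ler1n.
  set beta := \sum_x Num.sqrt (L i x) * Num.sqrt (L j x).
  have b0 : 0 <= beta by apply: sumr_ge0 => x _; apply: mulr_ge0; exact: sqrtr_ge0.
  apply: le_trans (trans_le HL0 Hp0 Hp1 (msz T) i j) _.
  have bm0 : 0 <= beta ^+ msz T by exact: exprn_ge0.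
  apply: le_trans (ler_wpM2r bm0 (pQ i)) _.
  apply: ler_wpM2l; first exact: ltW.
  pose Lg := ln (T%:R / eps).
  have T0 : 0 < T%:R :> R by exact: lt_le_trans ltr01 TR.
  have Lg0 : 0 <= Lg by apply: ln_ge0; rewrite ler_pdivlMr // mul1r; exact: le_trans (ltW e1) TR.
  have -> : (eps / T%:R) ^+ 2 * ee = expR (- (2 * Lg + C)).
    rewrite opprD expRD /ee; congr (_ * _).
    rewrite (_ : - (2 * Lg) = 2%:R * (- Lg)); last by rewrite mulrN.
    rewrite expRM_natl; congr (_ ^+ 2).
    rewrite expRN /Lg lnK ?invf_div // posrE divr_gt0 //; by [].
  have bb := bc_bound (HL0 i) (HL0 j) (HL1 i) (HL1 j).
  rewrite -/(dTV L i j) in bb.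
  have gd := closed i j iA jA.
  apply: (pow_bound b0 bb).
  pose K := 8 * s%:R * n%:R ^+ 2 / delta ^+ 2.
  have mK : K * (Lg + C) <= (msz T)%:R.
    rewrite /msz /sample_size -/K -/Lg natr_absz ger0_norm; first exact: ceil_ge.
    rewrite ceil_ge0; apply: lt_le_trans (ltrN10 _) _.
    apply: mulr_ge0; last exact: addr_ge0 Lg0 (ltW C0).
    rewrite /K; apply: divr_ge0; last exact: sqr_ge0.
    by apply: mulr_ge0; [apply: mulr_ge0; exact: ler0n|exact: sqr_ge0].
  have gK : g ^+ 2 * K = 8 * s%:R.
    rewrite /g /K; field; apply/andP; split; [by rewrite gt_eqF|by rewrite pnatr_eq0 -lt0n].
  have g2 : g ^+ 2 <= dTV L i j ^+ 2.
    apply: lerXn2r => //; rewrite nnegrE; [exact: ltW|exact: dTV_ge0].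
  apply: (@le_trans _ _ (g ^+ 2 * (msz T)%:R)); last first.
    by apply: ler_wpM2r => //; exact: ler0n.
  apply: (@le_trans _ _ (g ^+ 2 * (K * (Lg + C)))); last first.
    by apply: ler_wpM2l => //; exact: sqr_ge0.
  rewrite mulrA gK.
  have LC : 0 <= Lg + C by exact: addr_ge0 Lg0 (ltW C0).
  apply: (@le_trans _ _ (8 * (Lg + C))).
    by move: Lg0 C0; clear; move=> Lg0 C0; lra.
  apply: ler_wpM2r => //; rewrite ler_peMr //.
pose Bc := n%:R * Q * ee * eps ^+ 2.
have Bc0 : 0 <= Bc.
  rewrite /Bc; apply: mulr_ge0; last exact: sqr_ge0.
  apply: mulr_ge0; last exact: ltW.
  apply: mulr_ge0; [lra|exact: ltW].
have main : forall t, [/\ forall i, 0 <= hpost L p h1 msz t i,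
    \sum_i hpost L p h1 msz t i = 1 &
    \sum_(i | i \notin A) hpost L p h1 msz t i <= Bc * (2 - 2 / (t.+1)%:R)].
  elim => [|u [IH0 IH1 IH2]].
    split => /=.
    - by move=> i; case: (i == h1).
    - by rewrite (bigD1 h1) //= eqxx big1 ?addr0 // => i /negbTE ->.
    - rewrite big1; first by rewrite divr1; lra.
      by move=> i iA; case: eqP => // e; rewrite e h1A in iA.
  have hS : forall j, hpost L p h1 msz u.+1 j =
      \sum_i hpost L p h1 msz u i * trans L p (msz u.+1) i j by [].
  split.
  - move=> j; rewrite hS; apply: sumr_ge0 => i _; apply: mulr_ge0 => //.
    exact: trans_ge0.
  - under eq_bigr do rewrite hS.
    rewrite exchange_big /=.
    under eq_bigr do rewrite -mulr_sumr trans_row // mulr1.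
    exact: IH1.
  under eq_bigr do rewrite hS.
  rewrite exchange_big /=.
  under eq_bigr do rewrite -mulr_sumr.
  rewrite (bigID (fun i => i \in A)) /=.
  have E1 : \sum_(i | i \in A) hpost L p h1 msz u i *
       \sum_(j | j \notin A) trans L p (msz u.+1) i j <= Bc / (u.+1)%:R ^+ 2.
    apply: (@le_trans _ _ (\sum_(i | i \in A) hpost L p h1 msz u i * (Bc / (u.+1)%:R ^+ 2))).
      apply: ler_sum => i iA; apply: ler_wpM2l => //.
      apply: (@le_trans _ _ (\sum_(j | j \notin A) Q * ((eps / (u.+1)%:R) ^+ 2 * ee))).
        by apply: ler_sum => j jA; apply: step.
      apply: le_trans (sum_sub_le _ _) _.
        move=> j; apply: mulr_ge0; first exact: ltW.
        apply: mulr_ge0; [exact: sqr_ge0|exact: ltW].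
      rewrite sumr_const card_ord -mulr_natl /Bc.
      rewrite le_eqVlt; apply/orP; left; apply/eqP; field.
      by rewrite addrC natr1 pnatr_eq0.
    rewrite -big_distrl /= mulrC; apply: ler_piMr.
      by apply: divr_ge0 => //; exact: sqr_ge0.
    by rewrite -IH1; apply: sum_sub_le.
  have E2 : \sum_(i | i \notin A) hpost L p h1 msz u i *
       \sum_(j | j \notin A) trans L p (msz u.+1) i j <=
       \sum_(i | i \notin A) hpost L p h1 msz u i.
    apply: ler_sum => i _; apply: ler_piMr => //.
    rewrite -(trans_row HL0 HL1 Hp0 (msz u.+1) i); apply: sum_sub_le.
    by move=> j; exact: trans_ge0.
  apply: le_trans (lerD E1 (le_trans E2 IH2)) _.
  rewrite -[(u.+2)%:R]natr1.
  apply: final_arith => //; by rewrite ler1n.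
have [M0 M1 M2] := main t.
apply: (@le_trans _ _ (\sum_(i | i \in A) hpost L p h1 msz t i)).
  have : \sum_i hpost L p h1 msz t i = \sum_(i | i \in A) hpost L p h1 msz t i +
     \sum_(i | i \notin A) hpost L p h1 msz t i by rewrite (bigID (fun i => i \in A)).
  rewrite M1 => H.
  have H3 : Bc * (2 - 2 / (t.+1)%:R) <= 2 * Bc.
    have x0 : 0 <= 2 / (t.+1)%:R :> R by apply: divr_ge0; [by []|exact: ler0n].
    by rewrite mulrC ler_wpM2r // lerBlDr lerDl.
  have H4 : 2 * Bc <= eps.
    have -> : 2 * Bc = (C * ee) * eps ^+ 2 by rewrite /Bc /C; ring.
    have e2 : eps ^+ 2 <= eps by rewrite expr2; apply: ler_piMr; [exact: ltW|exact: ltW].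
    apply: le_trans e2; rewrite -[X in _ <= X]mul1r; apply: ler_wpM2r => //.
    exact: sqr_ge0.
  have Y := le_trans M2 (le_trans H3 H4).
  by rewrite {1}H lerBlDr lerD2l.
rewrite big_mkcond [X in _ <= X]big_mkcond /=; apply: ler_sum => i _.
case: ifP => iA; last by case: ifP.
by rewrite Adist.
Qed.
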